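(* Let $G=(V,E)$ be a finite graph and let $Q$ be an admissible random invariant set. For $B \subset V$ and $\mathcal F_B$-measurable $f: \mathcal S_V \to \mathbb R$, $$\mathbb E_V(f \mid \mathcal F_Q)\, \mathbb 1\{Q \cap B = \emptyset\} = \mathbb E_V\big(f\, \mathbb 1\{Q \cap B = \emptyset\} \mid \mathcal F_Q\big) = \mathbb E_{Q^c}\big( f(\cdot \oplus \mathrm{id}) \big)\, \mathbb 1\{Q \cap B = \emptyset\}.$$
   Context: For $U\subset V$, $\mathcal S_U$ is the set of bijections $\pi:U\to U$ with $\pi(x)=x$ or $\{x,\pi(x)\}\in E$; $\mathbb P_U(\pi)=e^{-\alpha\sum_{x\in U}\mathbb 1\{\pi(x)\neq x\}}/Z(U)$ with normalizing constant $Z(U)$, and $\mathbb E_U$ its expectation. For $B\subset V$, $\mathcal F_B$ is the $\sigma$-algebra on $\mathcal S_V$ generated by the values $\pi(x)$ and $\pi^{-1}(x)$, $x\in B$. For $\pi\in\mathcal S_U$, $\pi\oplus\mathrm{id}\in\mathcal S_V$ extends $\pi$ by the identity outside $U$. A set-valued random variable $Q:\mathcal S_V\to\mathcal P(V)$ is an admissible random invariant set if $\pi(Q(\pi))=Q(\pi)$ for all $\pi\in\mathcal S_V$ and the event $\{Q=A\}$ is $\mathcal F_A$-measurable for all $A\subset V$. $\mathcal F_Q=\{R\subset\mathcal S_V: R\cap\{Q=A\}\in\mathcal F_A\text{ for all }A\subset V\}$. $\mathbb E_{Q^c}(\cdot)$ denotes $\mathbb E_{A^c}(\cdot)$ evaluated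 at $A=Q$. *)

(* Defs.v *)
From HB Require Import structures.
From mathcomp Require Import all_boot all_order all_algebra fingroup perm.
From mathcomp Require Import reals sequences exp.
Set Implicit Arguments. Unset Strict Implicit. Unset Printing Implicit Defensive.
Import Order.TTheory GRing.Theory Num.Theory.
Local Open Scope ring_scope.

Section Defs.
Variables (V : finType) (e : rel V).

Definition allowed (p : {perm V}) : bool := [forall x, (p x == x) || e x (p x)].

Definition Omega := {p : {perm V} | allowed p}.

(* S_U, embedded into S_V via pi |-> pi (+) id: the elements of S_V fixing
   every point outside U.  Under this identification pi (+) id is pi itself. *)
Definition SU (U : {set V}) : {set Omega} :=
  [set w : Omega | [forall x, (x \notin U) ==> (val w x == x)]].

Definition agree (B : {set V}) (w1 w2 : Omega) : bool :=
  [forall x in B, (val w1 x == val w2 x) && ((val w1)^-1%g x == (val w2)^-1%g x)].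

(* A \in F_B : the sigma-algebra on the finite set S_V generated by the values
   pi(x), pi^-1(x), x in B, i.e. events determined by these values. *)
Definition inF (B : {set V}) (A : {set Omega}) : bool :=
  [forall w1, forall w2, agree B w1 w2 ==> ((w1 \in A) == (w2 \in A))].

Definition admissible (Q : Omega -> {set V}) : Prop :=
  (forall w : Omega, [set (val w) x | x in Q w] = Q w) /\ (forall A, inF A [set w | Q w == A]).

Definition FQ (Q : Omega -> {set V}) (A : {set Omega}) : Prop :=
  forall B, inF B (A :&: [set w | Q w == B]).

Section Real.
Variables (R : realType) (alpha : R).

Definition weight (U : {set V}) (w : Omega) : R :=
  expR (- (alpha * (#|[set x in U | val w x != x]|)%:R)).

Definition Zc (U : {set V}) : R := \sum_(w in SU U) weight U w.

(* E_U(g) for g defined on S_V, evaluated as g(. (+) id) on S_U *)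
Definition EU (U : {set V}) (g : Omega -> R) : R :=
  \sum_(w in SU U) g w * (weight U w / Zc U).

Definition EV (g : Omega -> R) : R := EU setT g.

Definition fmeas (F : {set Omega} -> Prop) (g : Omega -> R) : Prop :=
  forall r : R, F [set w | g w == r].

Definition is_cond_exp (F : {set Omega} -> Prop) (f g : Omega -> R) : Prop :=
  fmeas F g /\
  forall A, F A -> EV (fun w => g w * (w \in A)%:R) = EV (fun w => f w * (w \in A)%:R).

End Real.
End Defs.

(* Main.v *)
Require Import Defs.
From HB Require Import structures.
From mathcomp Require Import all_boot all_order all_algebra fingroup perm action.
From mathcomp Require Import reals sequences exp.
Set Implicit Arguments. Unset Strict Implicit. Unset Printing Implicit Defensive.
Import Order.TTheory GRing.Theory Num.Theory.
Local Open Scope ring_scope.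

Section Perms.
Variables (V : finType) (e : rel V).
Local Notation Om := (Omega e).

Lemma allowed1 : allowed e 1%g.
Proof. by apply/forallP => x; rewrite perm1 eqxx. Qed.

Definition om1 : Om := exist _ 1%g allowed1.

Lemma inSU U (w : Om) : (w \in SU e U) = perm_on U (val w).
Proof.
rewrite inE; apply/forallP/subsetP => [H x|H x].
  rewrite inE => wx; apply/negPn/negP => xU; move: (H x); rewrite xU /=.
  by rewrite (negbTE wx).
by apply/implyP => xU; apply/negPn/negP => wx; move/negP: xU; apply; apply: H; rewrite inE.
Qed.

Definition mulO (a b : Om) : Om := insubd a (val a * val b)%g.

Lemma allowed_mul C (a b : Om) : perm_on C (val a) -> perm_on (~:C) (val b) ->
  allowed e (val a * val b)%g.
Proof.
move=> ha hb; apply/forallP => x; rewrite permM.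
case xC: (x \in C).
  rewrite (out_perm hb); last by rewrite inE negbK (perm_closed _ ha).
  exact: (forallP (valP a) x).
rewrite (out_perm ha) ?xC //; exact: (forallP (valP b) x).
Qed.

Lemma mulOE C (a b : Om) : perm_on C (val a) -> perm_on (~:C) (val b) ->
  val (mulO a b) = (val a * val b)%g.
Proof. by move=> ha hb; rewrite /mulO insubdK //; apply: allowed_mul ha hb. Qed.

Definition stab (C : {set V}) (p : {perm V}) := forall x, (p x \in C) = (x \in C).

Lemma stabN C p : stab C p -> (p \in 'N(C | 'P))%g.
Proof. by move=> h; apply/astabsP => x; exact: h. Qed.

Lemma stabC C p : stab C p -> stab (~:C) p.
Proof. by move=> h x; rewrite !inE h. Qed.

Definition res (C : {set V}) (w : Om) : Om := insubd w (restr_perm C (val w)).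

Lemma resE C w : stab C (val w) -> val (res C w) = restr_perm C (val w).
Proof.
move=> h; rewrite /res insubdK //; apply/forallP => x.
case xC: (x \in C).
  rewrite restr_permE ?stabN //; exact: (forallP (valP w) x).
by rewrite (out_perm (restr_perm_on _ _)) ?xC ?eqxx.
Qed.


Lemma inF_eq B E (w1 w2 : Om) : inF B E -> agree B w1 w2 -> (w1 \in E) = (w2 \in E).
Proof. by move=> /forallP/(_ w1)/forallP/(_ w2)/implyP h /h /eqP. Qed.

Lemma agreeP (B : {set V}) (w1 w2 : Om) :
  (forall x, x \in B -> val w1 x = val w2 x /\ (val w1)^-1%g x = (val w2)^-1%g x) ->
  agree B w1 w2.
Proof. by move=> h; apply/forall_inP => x /h [-> ->]; rewrite !eqxx. Qed.

Lemma agree_sub (B B' : {set V}) (w1 w2 : Om) : B \subset B' -> agree B' w1 w2 -> agree B w1 w2.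
Proof. by move=> /subsetP sB /forall_inP h; apply/forall_inP => x /sB /h. Qed.


Lemma res_on C w : stab C (val w) -> perm_on C (val (res C w)).
Proof. by move=> h; rewrite resE //; exact: restr_perm_on. Qed.

Lemma res_in C w x : stab C (val w) -> x \in C -> val (res C w) x = val w x.
Proof. by move=> h xC; rewrite resE // restr_permE ?stabN. Qed.

Lemma res_mul C w : stab C (val w) -> mulO (res C w) (res (~:C) w) = w.
Proof.
move=> h; have h' := stabC h.
apply: val_inj; rewrite (mulOE (res_on h) (res_on h')); apply/permP => x.
rewrite permM; case xC: (x \in C).
  rewrite (res_in h xC) (out_perm (res_on h')) //.
  by rewrite inE negbK h.
rewrite (out_perm (res_on h)) ?xC // res_in // ?inE ?xC //.
Qed.

Lemma res_agree C w : stab C (val w) -> agree C w (res C w).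
Proof.
move=> h; apply: agreeP => x xC; split; first by rewrite res_in.
have wC : (val w)^-1%g x \in C by rewrite -h permKV.
apply: (@perm_inj _ (val (res C w))).
by rewrite permKV res_in // permKV.
Qed.

Lemma mul_agree C (t s : Om) : perm_on C (val t) -> perm_on (~:C) (val s) ->
  agree C (mulO t s) t.
Proof.
move=> ht hs; apply: agreeP => x xC; rewrite (mulOE ht hs); split.
  by rewrite permM (out_perm hs) // inE negbK (perm_closed _ ht).
by rewrite invMg permM (out_perm (perm_onV hs)) // inE negbK.
Qed.

Lemma mul_agreeC C (t s : Om) : perm_on C (val t) -> perm_on (~:C) (val s) ->
  agree (~:C) (mulO t s) s.
Proof.
move=> ht hs; apply: agreeP => x xC; rewrite (mulOE ht hs); split.
  by rewrite permM (out_perm ht) //; rewrite inE in xC.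
rewrite invMg permM (out_perm (perm_onV ht)) //.
by rewrite -(perm_closed _ (perm_onV hs)) inE in xC.
Qed.

Lemma mul_inj C (t s t' s' : Om) : perm_on C (val t) -> perm_on (~:C) (val s) ->
  perm_on C (val t') -> perm_on (~:C) (val s') -> mulO t s = mulO t' s' -> t = t' /\ s = s'.
Proof.
move=> ht hs ht' hs' /(congr1 val); rewrite (mulOE ht hs) (mulOE ht' hs') => E.
have tt : val t = val t'.
  apply/permP => x; case xC: (x \in C).
    have := congr1 (fun p : {perm V} => p x) E; rewrite /= !permM.
    rewrite (out_perm hs) ?(out_perm hs') // inE negbK ?(perm_closed _ ht') ?(perm_closed _ ht) //.
  by rewrite (out_perm ht) ?(out_perm ht') ?xC.
split; first exact: val_inj.
by apply: val_inj; move: E; rewrite tt => /mulgI.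
Qed.

End Perms.

Section Decomp.
Variables (V : finType) (e : rel V) (R : zmodType).
Local Notation Om := (Omega e).

Lemma decomp C (E : {set Om}) (H : Om -> R) :
  (forall w, w \in E -> stab C (val w)) -> inF C E ->
  \sum_(w in E) H w = \sum_(t in E :&: SU e C) \sum_(s in SU e (~:C)) H (mulO t s).
Proof.
move=> hE hF.
rewrite pair_big_dep /=.
pose D := setX (E :&: SU e C) (SU e (~:C)).
rewrite (eq_bigl (mem D)); last by move=> p; rewrite /D !inE.
rewrite -(big_imset H (h := fun p => mulO p.1 p.2)); last first.
  move=> [t s] [t' s'] /setXP[/setIP[_ ht] hs] /setXP[/setIP[_ ht'] hs'] /= eq.
  rewrite !inSU in ht hs ht' hs'.
  by have [-> ->] := mul_inj ht hs ht' hs' eq.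
apply: eq_bigl => w; apply/idP/imsetP.
  move=> wE; have h := hE w wE; exists (res C w, res (~:C) w); last by rewrite res_mul.
  apply/setXP; split; last by rewrite inSU res_on //; apply: stabC.
  apply/setIP; split; last by rewrite inSU res_on.
  by rewrite -(inF_eq hF (res_agree h)).
move=> [[t s] /setXP[/setIP[tE ht] hs] ->] /=.
move: ht hs; rewrite !inSU => ht hs.
by rewrite (inF_eq hF (mul_agree ht hs)).
Qed.

End Decomp.

Section Real.
Variables (V : finType) (e : rel V) (R : realType) (alpha : R).
Local Notation Om := (Omega e).

Definition Nsupp (w : Om) := #|[set x | val w x != x]|.
Definition Wt (w : Om) : R := expR (- (alpha * (Nsupp w)%:R)).

Lemma Wt_gt0 w : 0 < Wt w.
Proof. exact: expR_gt0. Qed.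

Lemma weightE (U : {set V}) w : w \in SU e U -> weight alpha U w = Wt w.
Proof.
rewrite inSU => h; rewrite /weight /Wt /Nsupp; congr (expR (- (alpha * _%:R))).
apply: eq_card => x; rewrite !inE; case xU: (x \in U) => //=.
by rewrite (out_perm h) ?xU ?eqxx.
Qed.

Lemma Nsupp_mul C (t s : Om) : perm_on C (val t) -> perm_on (~:C) (val s) ->
  Nsupp (mulO t s) = (Nsupp t + Nsupp s)%N.
Proof.
move=> ht hs; rewrite /Nsupp (mulOE ht hs).
have -> : [set x | (val t * val s)%g x != x] = [set x | val t x != x] :|: [set x | val s x != x].
  apply/setP => x; rewrite !inE permM; case xC: (x \in C).
    rewrite (out_perm hs) ?inE ?negbK ?(perm_closed _ ht) //.
    by rewrite (out_perm hs (x := x)) ?inE ?negbK // eqxx orbF.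
  by rewrite (out_perm ht) ?xC // eqxx.
rewrite cardsU; suff -> : [set x | val t x != x] :&: [set x | val s x != x] = set0 by rewrite cards0 subn0.
apply/setP => x; rewrite !inE; case xC: (x \in C).
  by rewrite (out_perm hs (x := x)) ?inE ?negbK // eqxx andbF.
by rewrite (out_perm ht) ?xC // eqxx.
Qed.

Lemma Wt_mul C (t s : Om) : perm_on C (val t) -> perm_on (~:C) (val s) ->
  Wt (mulO t s) = Wt t * Wt s.
Proof.
move=> ht hs; rewrite /Wt (Nsupp_mul ht hs) natrD mulrDr opprD expRD //.
Qed.

Lemma om1_SU U : om1 e \in SU e U.
Proof. by rewrite inSU; exact: perm_on1. Qed.

Lemma Zc_gt0 U : 0 < Zc e alpha U.
Proof.
rewrite /Zc (bigD1 (om1 e)) ?om1_SU //=.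
apply: ltr_pwDl; first by rewrite weightE ?om1_SU ?Wt_gt0.
by apply: sumr_ge0 => w /andP[wU _]; rewrite weightE // ltW ?Wt_gt0.
Qed.

Lemma ZcE U : Zc e alpha U = \sum_(w in SU e U) Wt w.
Proof. by apply: eq_bigr => w wU; rewrite weightE. Qed.

Lemma EUE U g : EU alpha U g = (\sum_(w in SU e U) g w * Wt w) / Zc e alpha U.
Proof.
rewrite /EU mulr_suml; apply: eq_bigr => w wU; by rewrite weightE // mulrA.
Qed.

Lemma SUT w : w \in SU e setT.
Proof. by rewrite inSU; apply/subsetP => x; rewrite inE. Qed.

Lemma EVE g : EV alpha g = (\sum_w g w * Wt w) / Zc e alpha setT.
Proof. by rewrite /EV EUE; congr (_ / _); apply: eq_bigl => w; rewrite SUT. Qed.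

End Real.

Section Main.
Variables (V : finType) (e : rel V) (R : realType) (alpha : R).
Local Notation Om := (Omega e).
Variables (Q : Om -> {set V}) (hQ : admissible Q).

Lemma stabQ w : stab (Q w) (val w).
Proof. by move=> x; rewrite -{1}(hQ.1 w) mem_imset //; exact: perm_inj. Qed.

Lemma inF_I (B : {set V}) (X Y : {set Om}) : inF B X -> inF B Y -> inF B (X :&: Y).
Proof.
move=> hX hY; rewrite /inF; apply/forallP => w1; apply/forallP => w2; apply/implyP => h.
by rewrite !inE (inF_eq hX h) (inF_eq hY h).
Qed.

Lemma inF_0 (B : {set V}) : inF B (set0 : {set Om}).
Proof. by rewrite /inF; apply/forallP => w1; apply/forallP => w2; rewrite !inE implybT. Qed.

Lemma FQ_local (X : {set Om}) :
  (forall C, exists Y, inF C (Y :&: [set w | Q w == C]) /\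
                       forall w, Q w = C -> (w \in X) = (w \in Y)) -> FQ Q X.
Proof.
move=> h C; have [Y [hY hXY]] := h C.
suff -> : X :&: [set w | Q w == C] = Y :&: [set w | Q w == C] by [].
by apply/setP => w; rewrite !inE; case: eqP => [/hXY ->|]; rewrite ?andbF ?andbT.
Qed.

Lemma FQ_const C (b : bool) : inF C ((if b then setT else set0) :&: [set w : Om | Q w == C]).
Proof. by case: b; rewrite ?setTI ?set0I ?inF_0 //; exact: hQ.2. Qed.

Lemma FQ_I X Y : FQ Q X -> FQ Q Y -> FQ Q (X :&: Y).
Proof.
move=> hX hY C; rewrite -[[set w | Q w == C]]setIid setIACA; exact: inF_I.
Qed.

Lemma EV_ext (g1 g2 : Om -> R) : g1 =1 g2 -> EV alpha g1 = EV alpha g2.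
Proof. by move=> h; rewrite /EV /EU; apply: eq_bigr => w _; rewrite h. Qed.

Lemma cond_uniq (f g1 g2 : Om -> R) : is_cond_exp alpha (FQ Q) f g1 ->
  is_cond_exp alpha (FQ Q) f g2 -> g1 =1 g2.
Proof.
move=> [m1 i1] [m2 i2] w0.
pose A := [set w | g1 w == g1 w0] :&: [set w | g2 w == g2 w0].
have FA : FQ Q A := FQ_I (m1 _) (m2 _).
have w0A : w0 \in A by rewrite !inE !eqxx.
have := i1 A FA; rewrite -(i2 A FA) !EVE /=.
move=> /(congr1 (fun x => x * Zc e alpha setT)); rewrite !divfK ?gt_eqF ?Zc_gt0 //.
rewrite (eq_bigr (fun w => g1 w0 * ((w \in A)%:R * Wt alpha w))); last first.
  move=> w _; case: (boolP (w \in A)) => [wA|_]; last by rewrite !(mulr0, mul0r).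
  rewrite mulr1 mul1r; move: wA; rewrite !inE => /andP[/eqP -> _] //.
rewrite [RHS](eq_bigr (fun w => g2 w0 * ((w \in A)%:R * Wt alpha w))); last first.
  move=> w _; case: (boolP (w \in A)) => [wA|_]; last by rewrite !(mulr0, mul0r).
  rewrite mulr1 mul1r; move: wA; rewrite !inE => /andP[_ /eqP ->] //.
rewrite -!mulr_sumr; apply: mulIf; rewrite gt_eqF //.
rewrite (bigD1 w0) //= w0A mul1r; apply: ltr_pwDl; first exact: Wt_gt0.
by apply: sumr_ge0 => w _; rewrite mulr_ge0 ?ler0n // ltW ?Wt_gt0.
Qed.

Lemma fmeas_eq (B : {set V}) (f : Om -> R) (w1 w2 : Om) :
  fmeas (fun A => inF B A) f -> agree B w1 w2 -> f w1 = f w2.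
Proof. by move=> hf h; have := inF_eq (hf (f w2)) h; rewrite !inE eqxx => /eqP. Qed.

Lemma block (A : {set Om}) (hA : FQ Q A) C (B : {set V}) (f : Om -> R)
  (hf : fmeas (fun A => inF B A) f) (hCB : B \subset ~: C) :
  (\sum_(w in A :&: [set w | Q w == C]) Wt alpha w) * EU alpha (~:C) f =
  \sum_(w in A :&: [set w | Q w == C]) f w * Wt alpha w.
Proof.
set E := A :&: _.
have hE : forall w, w \in E -> stab C (val w).
  by move=> w /setIP[_]; rewrite inE => /eqP <-; exact: stabQ.
have hF := hA C.
rewrite !(decomp _ hE hF) EUE ZcE.
set Z' := \sum_(s in SU e (~:C)) Wt alpha s.
set Fs := \sum_(s in SU e (~:C)) f s * Wt alpha s.
have e1 : forall t, t \in E :&: SU e C ->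
    \sum_(s in SU e (~:C)) Wt alpha (mulO t s) = Wt alpha t * Z'.
  move=> t /setIP[_]; rewrite inSU => ht; rewrite mulr_sumr; apply: eq_bigr => s.
  by rewrite inSU => hs; rewrite (Wt_mul alpha ht hs).
have e2 : forall t, t \in E :&: SU e C ->
    \sum_(s in SU e (~:C)) f (mulO t s) * Wt alpha (mulO t s) = Wt alpha t * Fs.
  move=> t /setIP[_]; rewrite inSU => ht; rewrite mulr_sumr; apply: eq_bigr => s.
  rewrite inSU => hs; rewrite (Wt_mul alpha ht hs).
  rewrite (fmeas_eq hf (agree_sub hCB (mul_agreeC ht hs))).
  by rewrite mulrCA.
rewrite (eq_bigr _ e1) (eq_bigr _ e2) -!mulr_suml -mulrA; congr (_ * _).
have Z'0 : Z' != 0 by rewrite /Z' -ZcE gt_eqF ?Zc_gt0.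
by rewrite mulrC divfK.
Qed.

End Main.

Unset Implicit Arguments.

Theorem proposition4p2 (V : finType) (e : rel V)
  (e_sym : symmetric e) (e_irr : irreflexive e)
  (R : realType) (alpha : R)
  (Q : Omega e -> {set V}) (hQ : admissible Q)
  (B : {set V}) (f : Omega e -> R) (hf : fmeas (fun A => inF B A) f) :
  let ind := fun w : Omega e => ((Q w :&: B == set0) : bool)%:R : R in
  let rhs := fun w : Omega e => EU alpha (~: Q w) f * ind w in
  is_cond_exp alpha (FQ Q) (fun w => f w * ind w) rhs /\
  forall g h : Omega e -> R,
    is_cond_exp alpha (FQ Q) f g ->
    is_cond_exp alpha (FQ Q) (fun w => f w * ind w) h ->
    forall w, g w * ind w = h w /\ h w = rhs w.
Proof.
move=> ind rhs.
have part1 : is_cond_exp alpha (FQ Q) (fun w => f w * ind w) rhs.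
  split.
    move=> r; apply: FQ_local => C.
    exists (if EU alpha (~:C) f * ((C :&: B == set0) : bool)%:R == r then setT else set0).
    split; first exact: FQ_const.
    move=> w QwC; rewrite inE /rhs /ind QwC.
    by case: ifP => h; rewrite ?h ?inE.
  move=> A hA; rewrite !EVE /=; congr (_ / _).
  rewrite (partition_big Q predT) // [RHS](partition_big Q predT) //=.
  apply: eq_bigr => C _.
  have conv : forall F : Omega e -> R,
      \sum_(w | Q w == C) F w * (w \in A)%:R * Wt alpha w =
      \sum_(w in A :&: [set w | Q w == C]) F w * Wt alpha w.
    move=> F; rewrite big_mkcond [RHS]big_mkcond; apply: eq_bigr => w _.
    rewrite !inE; case: (Q w == C); case: (w \in A); by rewrite /= ?mulr1 ?mulr0 ?mul0r.
  rewrite !conv.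
  have QE : forall w, w \in A :&: [set w | Q w == C] -> Q w = C.
    by move=> w /setIP[_]; rewrite inE => /eqP.
  rewrite (eq_bigr (fun w => (EU alpha (~:C) f * ((C :&: B == set0) : bool)%:R) * Wt alpha w)); last first.
    by move=> w /QE; rewrite /rhs /ind => ->.
  rewrite [RHS](eq_bigr (fun w => f w * ((C :&: B == set0) : bool)%:R * Wt alpha w)); last first.
    by move=> w /QE; rewrite /ind => ->.
  case: (C :&: B =P set0) => hCB /=; last first.
    by rewrite !big1 // => w _; rewrite mulr0 mul0r.
  have hCB' : B \subset ~: C by rewrite -disjoints_subset -setI_eq0 setIC hCB.
  rewrite -mulr_sumr mulr1 mulrC (block alpha hQ hA hf hCB').
  by apply: eq_bigr => w _; rewrite mulr1.
split; first exact: part1.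
move=> g h hg hh w.
have hgi : is_cond_exp alpha (FQ Q) (fun w => f w * ind w) (fun w => g w * ind w).
  split.
    move=> r; apply: FQ_local => C.
    case hC: (C :&: B == set0).
      exists [set w | g w == r]; split; first exact: (hg.1 r C).
      by move=> w' QwC; rewrite !inE /ind QwC hC mulr1.
    exists (if (0 : R) == r then setT else set0); split; first exact: FQ_const.
    move=> w' QwC; rewrite !inE /ind QwC hC mulr0.
    by case: ifP => h'; rewrite ?h' ?inE.
  move=> A hA.
  have key : forall k : Omega e -> R,
      EV alpha (fun w => (k w * ind w) * (w \in A)%:R) =
      EV alpha (fun w => k w * (w \in A :&: [set w | Q w :&: B == set0])%:R).
    move=> k; apply: EV_ext => w'; rewrite !inE /ind.
    by case: (w' \in A); case: (Q w' :&: B == set0); rewrite /= ?mulr0 ?mulr1 ?mul0r.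
  have hI : FQ Q [set w | Q w :&: B == set0].
    apply: FQ_local => C; exists (if C :&: B == set0 then setT else set0).
    split; first exact: FQ_const.
    by move=> w' QwC; rewrite !inE QwC; case: ifP => h'; rewrite ?inE.
  rewrite !key; apply: hg.2; exact: FQ_I.
split; [exact: (cond_uniq hgi hh) | exact: (cond_uniq hh part1)].
Qed.
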